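(* Let $k\ge1$, let $A_k$ be the matrix defined below and $\mathbf{b}=(\mathbf{w}_1,\mathbf{w}_2,c)^{\mathsf T}\in\mathbb{Z}^{2k+1}$ with $\mathbf{w}_1,\mathbf{w}_2\in\mathbb{Z}^k$, $c\in\mathbb{Z}$, and write $G=G_{A_k,\mathbf{b},\mathcal{G}(A_k)}$. If $l(\mathbf{b})=u(\mathbf{b})$, then $$\delta(G)=|\mathrm{supp}(\mathbf{w}_1+\|\mathbf{w}_1^-\|_\infty\mathbf{1}_k)|+|\mathrm{supp}(\mathbf{w}_2+\|\mathbf{w}_2^-\|_\infty\mathbf{1}_k)|.$$ If $l(\mathbf{b})<u(\mathbf{b})$, then $$\delta(G)=\min_{j\in\{1,2\}}|\mathrm{supp}(\mathbf{w}_j+\|\mathbf{w}_j^-\|_\infty\mathbf{1}_k)|+k+2^k.$$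
   Context: $I_k$ is the $k\times k$ identity, $\mathbf{1}_k$ the all-ones vector in $\mathbb{Z}^k$. Define $$A_k=\begin{pmatrix} I_k & I_k & 0 & 0 & -\mathbf{1}_k & \mathbf{0}\\ 0&0&I_k&I_k&\mathbf{0}&-\mathbf{1}_k\\ 0&0&0&0&1&1\end{pmatrix}\in\mathbb{Z}^{(2k+1)\times(4k+2)}$$ (zero blocks of appropriate sizes; last two columns are single columns). Fiber: $\mathcal{F}_A(\mathbf{b})=\{\mathbf{u}\in\mathbb{Z}^n_{\ge0}:A\mathbf{u}=\mathbf{b}\}$. For $\mathcal{M}\subset\mathbb{Z}^n$, $G_{A,\mathbf{b},\mathcal{M}}$ is the graph on $\mathcal{F}_A(\mathbf{b})$ with distinct $\mathbf{u},\mathbf{v}$ adjacent iff $\mathbf{u}-\mathbf{v}\in\pm\mathcal{M}$. The Graver basis $\mathcal{G}(A)$ is the set of $\sqsubseteq$-minimal elements of $(\ker A\cap\mathbb{Z}^n)\setminus\{\mathbf{0}\}$, where $\mathbf{u}\sqsubseteq\mathbf{v}$ iff $u_iv_i\ge0$ and $|u_i|\le|v_i|$ for all $i$. $\delta$ denotes minimal vertex degree; $\mathrm{supp}(\mathbf{w})$ is the set of indices of nonzero entries of $\mathbf{w}$. For $\mathbf{w}\in\mathbb{Z}^k$, $\mathbf{w}^-$ has entries $\max(-w_i,0)$. $l(\mathbf{b}):=\|\mathbf{w}_1^-\|_\infty$, $u(\mathbf{b}):=c-\|\mathbf{w}_2^-\|_\infty$. *)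

(* Defs.v *)
From mathcomp Require Import all_boot all_order all_algebra.
Set Implicit Arguments. Unset Strict Implicit. Unset Printing Implicit Defensive.
Import Order.TTheory GRing.Theory Num.Theory.
Local Open Scope ring_scope.

Notation ivec n := 'cV[int]_n.

(* Column layout (0-based): [0,k) first I_k, [k,2k) second I_k,
   [2k,3k) third I_k, [3k,4k) fourth I_k, 4k and 4k+1 the two single columns.
   Row layout: [0,k) first block row, [k,2k) second block row, 2k last row. *)
Definition A_mat (k : nat) : 'M[int]_(2 * k + 1, 4 * k + 2) :=
  \matrix_(i < 2 * k + 1, j < 4 * k + 2)
    (if (i < k)%N then
       (if (j == i :> nat) || (j == (i + k)%N :> nat) then 1
        else if j == (4 * k)%N :> nat then -1 else 0)
     else if (i < 2 * k)%N then
       (if (j == (i + k)%N :> nat) || (j == (i + 2 * k)%N :> nat) then 1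
        else if j == (4 * k)%N.+1 :> nat then -1 else 0)
     else
       (if (j == (4 * k)%N :> nat) || (j == (4 * k)%N.+1 :> nat) then 1 else 0)).

Definition vat (k : nat) (w : ivec k) (i : nat) : int :=
  if @insub nat (fun m => (m < k)%N) 'I_k i is Some j then w j 0 else 0.

Definition b_vec (k : nat) (w1 w2 : ivec k) (c : int) : ivec (2 * k + 1) :=
  \col_(i < 2 * k + 1)
    (if (i < k)%N then vat w1 i
     else if (i < 2 * k)%N then vat w2 (i - k)%N
     else c).

Definition in_fiber (m n : nat) (A : 'M[int]_(m, n)) (b : ivec m) (u : ivec n) : Prop :=
  (forall i, 0 <= u i 0) /\ A *m u = b.

Definition conf_le (n : nat) (u v : ivec n) : Prop :=
  forall i, 0 <= u i 0 * v i 0 /\ `|u i 0| <= `|v i 0|.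

Definition graver (m n : nat) (A : 'M[int]_(m, n)) (g : ivec n) : Prop :=
  A *m g = 0 /\ g != 0 /\
  (forall h : ivec n, A *m h = 0 -> h != 0 -> conf_le h g -> h = g).

Definition adjacent (m n : nat) (A : 'M[int]_(m, n)) (b : ivec m)
    (M : ivec n -> Prop) (u v : ivec n) : Prop :=
  in_fiber A b u /\ in_fiber A b v /\ u <> v /\ (M (u - v) \/ M (- (u - v))).

Definition has_degree (m n : nat) (A : 'M[int]_(m, n)) (b : ivec m)
    (M : ivec n -> Prop) (u : ivec n) (d : nat) : Prop :=
  exists s : seq (ivec n),
    uniq s /\ size s = d /\ (forall v, v \in s <-> adjacent A b M u v).

Definition min_degree (m n : nat) (A : 'M[int]_(m, n)) (b : ivec m)
    (M : ivec n -> Prop) (d : nat) : Prop :=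
  (exists u, in_fiber A b u /\ has_degree A b M u d) /\
  (forall u d', in_fiber A b u -> has_degree A b M u d' -> (d <= d')%N).

Definition negnorm (k : nat) (w : ivec k) : int :=
  \big[Num.max/0]_(i < k) Num.max (- w i 0) 0.

Definition supp_shift (k : nat) (w : ivec k) : nat :=
  #|[set i : 'I_k | w i 0 + negnorm w != 0]|.

Definition l_b (k : nat) (w1 w2 : ivec k) (c : int) : int := negnorm w1.
Definition u_b (k : nat) (w1 w2 : ivec k) (c : int) : int := c - negnorm w2.

(* Main.v *)
Require Import Defs.
From mathcomp Require Import all_boot all_order all_algebra zify.
Set Implicit Arguments. Unset Strict Implicit. Unset Printing Implicit Defensive.
Import Order.TTheory GRing.Theory Num.Theory.
Local Open Scope ring_scope.

Definition mk (n : nat) (f : nat -> int) : ivec n := \col_(j < n) f j.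

Lemma vat_ord n (g : ivec n) (o : 'I_n) : vat g o = g o 0.
Proof. by rewrite /vat valK. Qed.

Lemma vat_out n (g : ivec n) j : (n <= j)%N -> vat g j = 0.
Proof. by move=> h; rewrite /vat insubF // ltnNge h. Qed.

Lemma vat_mk n f j : vat (mk n f) j = if (j < n)%N then f j else 0.
Proof.
case: (ltnP j n) => h; last by rewrite vat_out.
by rewrite (vat_ord _ (Ordinal h)) mxE.
Qed.

Lemma vatD n (g h : ivec n) j : vat (g + h) j = vat g j + vat h j.
Proof.
case: (ltnP j n) => hj; last by rewrite !vat_out.
by rewrite !(vat_ord _ (Ordinal hj)) mxE.
Qed.

Lemma vatN n (g : ivec n) j : vat (- g) j = - vat g j.
Proof.
case: (ltnP j n) => hj; last by rewrite !vat_out ?oppr0.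
by rewrite !(vat_ord _ (Ordinal hj)) mxE.
Qed.

Lemma vat0 n j : vat (0 : ivec n) j = 0.
Proof.
case: (ltnP j n) => hj; last by rewrite !vat_out.
by rewrite !(vat_ord _ (Ordinal hj)) mxE.
Qed.

Lemma vec_ext n (g h : ivec n) : (forall j, (j < n)%N -> vat g j = vat h j) -> g = h.
Proof.
move=> H; apply/matrixP => i j; rewrite (ord1 j).
by have := H i (ltn_ord i); rewrite !vat_ord.
Qed.

Lemma sum_delta n (g : ivec n) a :
  \sum_(j < n) (((j : nat) == a)%:R * g j 0) = vat g a.
Proof.
case: (ltnP a n) => ha.
  rewrite (bigD1 (Ordinal ha)) //= eqxx mul1r big1 ?addr0.
    by rewrite -(vat_ord g (Ordinal ha)).
  move=> j /eqP nj; case: eqP => [e|_]; last by rewrite mul0r.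
  by case: nj; apply: val_inj.
rewrite vat_out // big1 // => j _; case: eqP => [e|_]; last by rewrite mul0r.
by move: ha; rewrite -e leqNgt ltn_ord.
Qed.

Lemma ent3 (j a b c : nat) : a != b -> a != c -> b != c ->
  (if (j == a) || (j == b) then 1 else if j == c then -1 else 0 : int)
  = (j == a)%:R + (j == b)%:R - (j == c)%:R.
Proof.
move=> hab hac hbc.
case: (eqVneq j a) => [e|na]; first by subst j; rewrite (negbTE hab) (negbTE hac) /= addr0 subr0.
case: (eqVneq j b) => [e|nb]; first by subst j; rewrite (negbTE hbc) /= add0r subr0.
by case: (eqVneq j c) => [e|nc] /=; rewrite ?add0r ?sub0r ?subr0.
Qed.

Lemma ent2 (j a b : nat) : a != b ->
  (if (j == a) || (j == b) then 1 else 0 : int) = (j == a)%:R + (j == b)%:R.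
Proof.
move=> hab.
case: (eqVneq j a) => [e|na]; first by subst j; rewrite (negbTE hab) /= addr0.
by case: (eqVneq j b) => [e|nb] /=; rewrite ?add0r.
Qed.

Lemma A_row k (g : ivec (4 * k + 2)) (i : 'I_(2 * k + 1)) :
  (A_mat k *m g) i 0 =
  if (i < k)%N then vat g i + vat g (i + k)%N - vat g (4 * k)%N
  else if (i < 2 * k)%N then vat g (i + k)%N + vat g (i + 2 * k)%N - vat g (4 * k).+1
  else vat g (4 * k)%N + vat g (4 * k).+1.
Proof.
rewrite mxE; case: ifP => h1.
  rewrite (eq_bigr (fun j : 'I__ => (((j:nat) == i)%:R + ((j:nat) == (i + k)%N)%:R - ((j:nat) == (4 * k)%N)%:R) * g j 0)); last first.
    by move=> j _; rewrite mxE h1 ent3 //; apply/negP => /eqP; lia.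
  under eq_bigr do rewrite mulrBl mulrDl.
  by rewrite sumrB big_split /= !sum_delta.
case: ifP => h2.
  rewrite (eq_bigr (fun j : 'I__ => (((j:nat) == (i + k)%N)%:R + ((j:nat) == (i + 2 * k)%N)%:R - ((j:nat) == (4 * k).+1)%:R) * g j 0)); last first.
    by move=> j _; rewrite mxE h1 h2 ent3 //; apply/negP => /eqP; lia.
  under eq_bigr do rewrite mulrBl mulrDl.
  by rewrite sumrB big_split /= !sum_delta.
rewrite (eq_bigr (fun j : 'I__ => (((j:nat) == (4 * k)%N)%:R + ((j:nat) == (4 * k).+1)%:R) * g j 0)); last first.
  by move=> j _; rewrite mxE h1 h2 ent2 //; apply/negP => /eqP; lia.
under eq_bigr do rewrite mulrDl.
by rewrite big_split /= !sum_delta.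
Qed.

Section S.
Variable k : nat.
Local Notation N := (4 * k + 2)%N.
Implicit Types g h u v : ivec N.

Definition px g i := vat g i.
Definition py g i := vat g (k + i)%N.
Definition pz g i := vat g (2 * k + i)%N.
Definition pt g i := vat g (3 * k + i)%N.
Definition ps g := vat g (4 * k)%N.
Definition pr g := vat g (4 * k).+1.

Lemma all_coords (P : nat -> Prop) :
  (forall i, (i < k)%N -> P i) -> (forall i, (i < k)%N -> P (k + i)%N) ->
  (forall i, (i < k)%N -> P (2 * k + i)%N) -> (forall i, (i < k)%N -> P (3 * k + i)%N) ->
  P (4 * k)%N -> P (4 * k).+1 -> forall j, (j < N)%N -> P j.
Proof.
move=> Hx Hy Hz Ht Hs Hr j hj.
case: (ltnP j k) => h1; first by apply: Hx.
case: (ltnP j (2 * k)) => h2; first by rewrite -(subnKC h1); apply: Hy; lia.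
case: (ltnP j (3 * k)) => h3; first by rewrite -(subnKC h2); apply: Hz; lia.
case: (ltnP j (4 * k)) => h4; first by rewrite -(subnKC h3); apply: Ht; lia.
by have [->|->] : j = (4 * k)%N \/ j = (4 * k).+1 by lia.
Qed.

Lemma vec_blk_ext g h :
  (forall i, (i < k)%N -> px g i = px h i) -> (forall i, (i < k)%N -> py g i = py h i) ->
  (forall i, (i < k)%N -> pz g i = pz h i) -> (forall i, (i < k)%N -> pt g i = pt h i) ->
  ps g = ps h -> pr g = pr h -> g = h.
Proof. by move=> *; apply: vec_ext; apply: all_coords. Qed.

Definition nonneg n (u : ivec n) := forall i, 0 <= u i 0.

Lemma nonneg_vat n (u : ivec n) : nonneg u -> forall j, 0 <= vat u j.
Proof.
move=> H j; case: (ltnP j n) => hj; last by rewrite vat_out.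
by rewrite (vat_ord _ (Ordinal hj)).
Qed.

Lemma nonneg_blk u :
  (forall i, (i < k)%N -> 0 <= px u i) -> (forall i, (i < k)%N -> 0 <= py u i) ->
  (forall i, (i < k)%N -> 0 <= pz u i) -> (forall i, (i < k)%N -> 0 <= pt u i) ->
  0 <= ps u -> 0 <= pr u -> nonneg u.
Proof.
move=> *; move=> i; rewrite -vat_ord.
by apply: (all_coords (P := fun j => 0 <= vat u j)).
Qed.

Definition C (a b : int) := 0 <= a * b /\ `|a| <= `|b|.

Lemma conf_vat n (h g : ivec n) : conf_le h g -> forall j, C (vat h j) (vat g j).
Proof.
move=> H j; case: (ltnP j n) => hj; last by rewrite !vat_out //; split; rewrite ?mulr0.
by rewrite !(vat_ord _ (Ordinal hj)); apply: H.
Qed.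

Lemma conf_blk h g :
  (forall i, (i < k)%N -> C (px h i) (px g i)) -> (forall i, (i < k)%N -> C (py h i) (py g i)) ->
  (forall i, (i < k)%N -> C (pz h i) (pz g i)) -> (forall i, (i < k)%N -> C (pt h i) (pt g i)) ->
  C (ps h) (ps g) -> C (pr h) (pr g) -> conf_le h g.
Proof.
move=> *; move=> i; rewrite -!vat_ord.
by apply: (all_coords (P := fun j => C (vat h j) (vat g j))).
Qed.

Lemma C_pos a b : C a b -> 0 <= b -> 0 <= a <= b.
Proof. rewrite /C; nia. Qed.
Lemma C_neg a b : C a b -> b <= 0 -> b <= a <= 0.
Proof. rewrite /C; nia. Qed.
Lemma C_intro a b : (0 <= a <= b) \/ (b <= a <= 0) -> C a b.
Proof. rewrite /C; nia. Qed.
Lemma C_opp a b : C a (- b) -> C (- a) b.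
Proof. rewrite /C; nia. Qed.

Lemma Amul_iff g (w1 w2 : ivec k) (c : int) :
  A_mat k *m g = b_vec w1 w2 c <->
  (forall i, (i < k)%N -> px g i + py g i - ps g = vat w1 i) /\
  (forall i, (i < k)%N -> pz g i + pt g i - pr g = vat w2 i) /\
  ps g + pr g = c.
Proof.
split.
  move=> E; split; [|split].
  - move=> i hi; have hi' : (i < 2 * k + 1)%N by lia.
    move/matrixP: E => /(_ (Ordinal hi') 0); rewrite A_row !mxE /= hi.
    by rewrite /px /py /ps (addnC k i).
  - move=> i hi; have hi' : (k + i < 2 * k + 1)%N by lia.
    move/matrixP: E => /(_ (Ordinal hi') 0); rewrite A_row !mxE /=.
    have -> : (k + i < k)%N = false by lia.
    have -> : (k + i < 2 * k)%N = true by lia.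
    have -> : (k + i + k = 2 * k + i)%N by lia.
    have -> : (k + i + 2 * k = 3 * k + i)%N by lia.
    by have -> : (k + i - k = i)%N by lia.
  - have hi' : (2 * k < 2 * k + 1)%N by lia.
    move/matrixP: E => /(_ (Ordinal hi') 0); rewrite A_row !mxE /=.
    have -> : (2 * k < k)%N = false by lia.
    by have -> : (2 * k < 2 * k)%N = false by lia.
move=> [Hx [Hz Hs]]; apply/matrixP => i j; rewrite (ord1 j) A_row mxE.
case: ifP => h1; first by rewrite -Hx // /px /py /ps (addnC k i).
case: ifP => h2; last by [].
have hi : (i - k < k)%N by lia.
rewrite -Hz // /pz /pt /pr (_ : (2 * k + (i - k) = i + k)%N); last lia.
by rewrite (_ : (3 * k + (i - k) = i + 2 * k)%N); last lia.
Qed.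

Lemma b_vec0 : b_vec (0 : ivec k) 0 0 = 0.
Proof. by apply/matrixP => i j; rewrite !mxE !vat0; case: ifP => //; case: ifP. Qed.

Lemma ker_iff g :
  A_mat k *m g = 0 <->
  (forall i, (i < k)%N -> px g i + py g i = ps g) /\
  (forall i, (i < k)%N -> pz g i + pt g i = pr g) /\
  ps g + pr g = 0.
Proof.
rewrite -b_vec0 Amul_iff; split => [[H1 [H2 H3]]|[H1 [H2 H3]]]; split => //; try split => //.
- by move=> i hi; apply/eqP; rewrite -subr_eq0 H1 // vat0.
- by move=> i hi; apply/eqP; rewrite -subr_eq0 H2 // vat0.
- by move=> i hi; rewrite vat0; apply/eqP; rewrite subr_eq0 H1.
- by move=> i hi; rewrite vat0; apply/eqP; rewrite subr_eq0 H2.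
Qed.

End S.

Section S.
Variable k : nat.
Local Notation N := (4 * k + 2)%N.
Implicit Types g h u v : ivec N.

Definition blk (fx fy fz ft : nat -> int) (a b : int) : ivec N :=
  mk N (fun j => if (j < k)%N then fx j else if (j < 2 * k)%N then fy (j - k)%N
     else if (j < 3 * k)%N then fz (j - 2 * k)%N else if (j < 4 * k)%N then ft (j - 3 * k)%N
     else if j == (4 * k)%N then a else b).

Section B.
Variables (fx fy fz ft : nat -> int) (a b : int).
Local Notation B := (blk fx fy fz ft a b).
Lemma px_blk i : (i < k)%N -> px B i = fx i.
Proof.
move=> hi; rewrite /px vat_mk.
have -> : (i < N)%N = true by lia.
by have -> : (i < k)%N = true by lia.
Qed.
Lemma py_blk i : (i < k)%N -> py B i = fy i.
Proof.
move=> hi; rewrite /py vat_mk.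
have -> : (k + i < N)%N = true by lia.
have -> : (k + i < k)%N = false by lia.
have -> : (k + i < 2 * k)%N = true by lia.
by have -> : (k + i - k = i)%N by lia.
Qed.
Lemma pz_blk i : (i < k)%N -> pz B i = fz i.
Proof.
move=> hi; rewrite /pz vat_mk.
have -> : (2 * k + i < N)%N = true by lia.
have -> : (2 * k + i < k)%N = false by lia.
have -> : (2 * k + i < 2 * k)%N = false by lia.
have -> : (2 * k + i < 3 * k)%N = true by lia.
by have -> : (2 * k + i - 2 * k = i)%N by lia.
Qed.
Lemma pt_blk i : (i < k)%N -> pt B i = ft i.
Proof.
move=> hi; rewrite /pt vat_mk.
have -> : (3 * k + i < N)%N = true by lia.
have -> : (3 * k + i < k)%N = false by lia.
have -> : (3 * k + i < 2 * k)%N = false by lia.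
have -> : (3 * k + i < 3 * k)%N = false by lia.
have -> : (3 * k + i < 4 * k)%N = true by lia.
by have -> : (3 * k + i - 3 * k = i)%N by lia.
Qed.
Lemma ps_blk : ps B = a.
Proof.
rewrite /ps vat_mk.
have -> : (4 * k < N)%N = true by lia.
have -> : (4 * k < k)%N = false by lia.
have -> : (4 * k < 2 * k)%N = false by lia.
have -> : (4 * k < 3 * k)%N = false by lia.
have -> : (4 * k < 4 * k)%N = false by lia.
by rewrite eqxx.
Qed.
Lemma pr_blk : pr B = b.
Proof.
rewrite /pr vat_mk.
have -> : ((4 * k).+1 < N)%N = true by lia.
have -> : ((4 * k).+1 < k)%N = false by lia.
have -> : ((4 * k).+1 < 2 * k)%N = false by lia.
have -> : ((4 * k).+1 < 3 * k)%N = false by lia.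
have -> : ((4 * k).+1 < 4 * k)%N = false by lia.
by have -> : ((4 * k).+1 == 4 * k)%N = false by lia.
Qed.
End B.

Lemma pxD g h i : px (g + h) i = px g i + px h i. Proof. exact: vatD. Qed.
Lemma pyD g h i : py (g + h) i = py g i + py h i. Proof. exact: vatD. Qed.
Lemma pzD g h i : pz (g + h) i = pz g i + pz h i. Proof. exact: vatD. Qed.
Lemma ptD g h i : pt (g + h) i = pt g i + pt h i. Proof. exact: vatD. Qed.
Lemma psD g h : ps (g + h) = ps g + ps h. Proof. exact: vatD. Qed.
Lemma prD g h : pr (g + h) = pr g + pr h. Proof. exact: vatD. Qed.
Lemma pxN g i : px (- g) i = - px g i. Proof. exact: vatN. Qed.
Lemma pyN g i : py (- g) i = - py g i. Proof. exact: vatN. Qed.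
Lemma pzN g i : pz (- g) i = - pz g i. Proof. exact: vatN. Qed.
Lemma ptN g i : pt (- g) i = - pt g i. Proof. exact: vatN. Qed.
Lemma psN g : ps (- g) = - ps g. Proof. exact: vatN. Qed.
Lemma prN g : pr (- g) = - pr g. Proof. exact: vatN. Qed.
Lemma px0 i : px (0 : ivec N) i = 0. Proof. exact: vat0. Qed.
Lemma py0 i : py (0 : ivec N) i = 0. Proof. exact: vat0. Qed.
Lemma pz0 i : pz (0 : ivec N) i = 0. Proof. exact: vat0. Qed.
Lemma pt0 i : pt (0 : ivec N) i = 0. Proof. exact: vat0. Qed.
Lemma ps0 : ps (0 : ivec N) = 0. Proof. exact: vat0. Qed.
Lemma pr0 : pr (0 : ivec N) = 0. Proof. exact: vat0. Qed.

End S.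

Lemma C_elim a b : C a b -> (0 <= a <= b) \/ (b <= a <= 0).
Proof. rewrite /C; nia. Qed.

Section S.
Variable k : nat.
Local Notation N := (4 * k + 2)%N.
Implicit Types g h u v : ivec N.
Local Notation A := (A_mat k).

Definition dl (i : nat) : nat -> int := fun j => (j == i)%:R.
Definition e1 i : ivec N := blk k (dl i) (fun j => - dl i j) (fun _ => 0) (fun _ => 0) 0 0.
Definition e2 i : ivec N := blk k (fun _ => 0) (fun _ => 0) (dl i) (fun j => - dl i j) 0 0.
Definition H (s t : nat -> bool) : ivec N :=
  blk k (fun j => (s j)%:R) (fun j => (~~ s j)%:R) (fun j => - (t j)%:R) (fun j => - (~~ t j)%:R) 1 (-1).

Lemma conf_blocks h g : conf_le h g ->
  (forall i, C (px h i) (px g i)) /\ (forall i, C (py h i) (py g i)) /\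
  (forall i, C (pz h i) (pz g i)) /\ (forall i, C (pt h i) (pt g i)) /\
  C (ps h) (ps g) /\ C (pr h) (pr g).
Proof. by move=> hc; have E := conf_vat hc; split; [|split; [|split; [|split; [|split]]]] => *; apply: E. Qed.

Lemma graver_opp g : graver A g -> graver A (- g).
Proof.
move=> [hk [hn hm]]; split; first by rewrite mulmxN hk oppr0.
split; first by rewrite oppr_eq0.
move=> h hh hn' hc; apply/eqP; rewrite -eqr_oppLR; apply/eqP; apply: hm.
- by rewrite mulmxN hh oppr0.
- by rewrite oppr_eq0.
- by move=> i; have := hc i; rewrite mxE => ?; rewrite mxE; apply: C_opp.
Qed.

Lemma graver_H s t : graver A (H s t).
Proof.
split.
  apply/ker_iff; split; [|split].
  - by move=> i hi; rewrite px_blk // py_blk // ps_blk; case: (s i).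
  - by move=> i hi; rewrite pz_blk // pt_blk // pr_blk; case: (t i); rewrite /= ?oppr0 ?subr0 ?sub0r.
  - by rewrite ps_blk pr_blk subrr.
split.
  by apply/eqP => E; have := congr1 (@ps k) E; rewrite ps_blk ps0.
move=> h hk hn hc.
have [Hx [Hz Hs]] := (ker_iff h).1 hk.
have [Cx [Cy [Cz [Ct [Cs Cr]]]]] := conf_blocks hc.
have := C_elim Cs; have := C_elim Cr; rewrite ps_blk pr_blk => hr hs.
have [hs0|hs1] : ps h = 0 \/ ps h = 1 by lia.
  exfalso; move/negP: hn; apply; apply/eqP.
  apply: vec_blk_ext => [i hi|i hi|i hi|i hi||]; rewrite ?px0 ?py0 ?pz0 ?pt0 ?ps0 ?pr0; try lia;
  have := C_elim (Cx i); have := C_elim (Cy i); have := C_elim (Cz i); have := C_elim (Ct i);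
  have := Hx i hi; have := Hz i hi;
  rewrite ?px_blk ?py_blk ?pz_blk ?pt_blk //; case: (s i); case: (t i) => /=; lia.
apply: vec_blk_ext => [i hi|i hi|i hi|i hi||]; rewrite ?px_blk ?py_blk ?pz_blk ?pt_blk ?ps_blk ?pr_blk //; try lia;
  have := C_elim (Cx i); have := C_elim (Cy i); have := C_elim (Cz i); have := C_elim (Ct i);
  have := Hx i hi; have := Hz i hi;
  rewrite ?px_blk ?py_blk ?pz_blk ?pt_blk //; case: (s i); case: (t i) => /=; lia.
Qed.


Lemma graver_e1 i : (i < k)%N -> graver A (e1 i).
Proof.
move=> hik; split.
  apply/ker_iff; split; [|split].
  - by move=> j hj; rewrite px_blk // py_blk // ps_blk subrr.
  - by move=> j hj; rewrite pz_blk // pt_blk // pr_blk addr0.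
  - by rewrite ps_blk pr_blk addr0.
split.
  by apply/eqP => E; have := congr1 (fun g => @px k g i) E; rewrite px_blk // px0 /dl eqxx.
move=> h hk hn hc.
have [Hx [Hz Hs]] := (ker_iff h).1 hk.
have [Cx [Cy [Cz [Ct [Cs Cr]]]]] := conf_blocks hc.
have := C_elim Cs; have := C_elim Cr; rewrite ps_blk pr_blk => hr hs.
have hxi : px h i = 0 \/ px h i = 1.
  by have := C_elim (Cx i); rewrite px_blk // /dl eqxx; lia.
case: hxi => hx0.
  exfalso; move/negP: hn; apply; apply/eqP.
  apply: vec_blk_ext => [j hj|j hj|j hj|j hj||]; rewrite ?px0 ?py0 ?pz0 ?pt0 ?ps0 ?pr0; try lia;
  have := C_elim (Cx j); have := C_elim (Cy j); have := C_elim (Cz j); have := C_elim (Ct j);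
  have := Hx j hj; have := Hz j hj;
  rewrite ?px_blk ?py_blk ?pz_blk ?pt_blk // /dl; case: (eqVneq j i) => [e|ne] /=; try subst j; lia.
apply: vec_blk_ext => [j hj|j hj|j hj|j hj||]; rewrite ?px_blk ?py_blk ?pz_blk ?pt_blk ?ps_blk ?pr_blk //; try lia;
  have := C_elim (Cx j); have := C_elim (Cy j); have := C_elim (Cz j); have := C_elim (Ct j);
  have := Hx j hj; have := Hz j hj;
  rewrite ?px_blk ?py_blk ?pz_blk ?pt_blk // /dl; case: (eqVneq j i) => [e|ne] /=; try subst j; lia.
Qed.

Lemma graver_e2 i : (i < k)%N -> graver A (e2 i).
Proof.
move=> hik; split.
  apply/ker_iff; split; [|split].
  - by move=> j hj; rewrite px_blk // py_blk // ps_blk addr0.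
  - by move=> j hj; rewrite pz_blk // pt_blk // pr_blk subrr.
  - by rewrite ps_blk pr_blk addr0.
split.
  by apply/eqP => E; have := congr1 (fun g => @pz k g i) E; rewrite pz_blk // pz0 /dl eqxx.
move=> h hk hn hc.
have [Hx [Hz Hs]] := (ker_iff h).1 hk.
have [Cx [Cy [Cz [Ct [Cs Cr]]]]] := conf_blocks hc.
have := C_elim Cs; have := C_elim Cr; rewrite ps_blk pr_blk => hr hs.
have hxi : pz h i = 0 \/ pz h i = 1.
  by have := C_elim (Cz i); rewrite pz_blk // /dl eqxx; lia.
case: hxi => hx0.
  exfalso; move/negP: hn; apply; apply/eqP.
  apply: vec_blk_ext => [j hj|j hj|j hj|j hj||]; rewrite ?px0 ?py0 ?pz0 ?pt0 ?ps0 ?pr0; try lia;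
  have := C_elim (Cx j); have := C_elim (Cy j); have := C_elim (Cz j); have := C_elim (Ct j);
  have := Hx j hj; have := Hz j hj;
  rewrite ?px_blk ?py_blk ?pz_blk ?pt_blk // /dl; case: (eqVneq j i) => [e|ne] /=; try subst j; lia.
apply: vec_blk_ext => [j hj|j hj|j hj|j hj||]; rewrite ?px_blk ?py_blk ?pz_blk ?pt_blk ?ps_blk ?pr_blk //; try lia;
  have := C_elim (Cx j); have := C_elim (Cy j); have := C_elim (Cz j); have := C_elim (Ct j);
  have := Hx j hj; have := Hz j hj;
  rewrite ?px_blk ?py_blk ?pz_blk ?pt_blk // /dl; case: (eqVneq j i) => [e|ne] /=; try subst j; lia.
Qed.


Lemma graver_pos g : graver A g -> 0 < ps g -> exists s t, g = H s t.
Proof.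
move=> [hk [hn hm]] hp.
have [Hx [Hz Hs]] := (ker_iff g).1 hk.
exists (fun j => 0 < px g j), (fun j => pz g j < 0).
symmetry; apply: hm; [exact: (graver_H _ _).1 | exact: (graver_H _ _).2.1 | ].
apply: conf_blk => [i hi|i hi|i hi|i hi||]; rewrite ?px_blk ?py_blk ?pz_blk ?pt_blk ?ps_blk ?pr_blk //; apply: C_intro;
  try (have := Hx i hi; have := Hz i hi); try lia;
  first [ (case: (boolP (0 < px g i)) => /= h; lia) | (case: (boolP (pz g i < 0)) => /= h; lia) ].
Qed.

Lemma graver_e1_pos g i : graver A g -> ps g = 0 -> (i < k)%N -> 0 < px g i -> g = e1 i.
Proof.
move=> [hk [hn hm]] hs hi hp.
have [Hx [Hz Hs]] := (ker_iff g).1 hk.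
symmetry; apply: hm; [exact: (graver_e1 hi).1 | exact: (graver_e1 hi).2.1 | ].
apply: conf_blk => [j hj|j hj|j hj|j hj||]; rewrite ?px_blk ?py_blk ?pz_blk ?pt_blk ?ps_blk ?pr_blk //; apply: C_intro;
  try (have := Hx j hj; have := Hz j hj); try lia;
  rewrite /dl; case: (eqVneq j i) => [e|ne] /=; try subst j; lia.
Qed.

Lemma graver_e2_pos g i : graver A g -> ps g = 0 -> (i < k)%N -> 0 < pz g i -> g = e2 i.
Proof.
move=> [hk [hn hm]] hs hi hp.
have [Hx [Hz Hs]] := (ker_iff g).1 hk.
symmetry; apply: hm; [exact: (graver_e2 hi).1 | exact: (graver_e2 hi).2.1 | ].
apply: conf_blk => [j hj|j hj|j hj|j hj||]; rewrite ?px_blk ?py_blk ?pz_blk ?pt_blk ?ps_blk ?pr_blk //; apply: C_intro;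
  try (have := Hx j hj; have := Hz j hj); try lia;
  rewrite /dl; case: (eqVneq j i) => [e|ne] /=; try subst j; lia.
Qed.

Lemma graver_cases g : graver A g ->
  (exists i, (i < k)%N /\ (g = e1 i \/ g = - e1 i)) \/
  (exists i, (i < k)%N /\ (g = e2 i \/ g = - e2 i)) \/
  (exists s t, g = H s t \/ g = - H s t).
Proof.
move=> G.
have [hk [hn hm]] := G.
have [Hx [Hz Hs]] := (ker_iff g).1 hk.
have Go := graver_opp G.
case: (ltrgtP (ps g) 0) => hs.
- right; right; have [s [t E]] : exists s t, - g = H s t by apply: graver_pos Go _; rewrite psN; lia.
  by exists s, t; right; rewrite -E opprK.
- right; right; have [s [t E]] := graver_pos G hs.
  by exists s, t; left.
case: (boolP [exists i : 'I_k, (px g i != 0) || (pz g i != 0)]).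
  move/existsP => [i /orP [hx|hz]].
    left; exists i; split => //.
    case: (ltrgtP (px g i) 0) => hp; last by rewrite hp eqxx in hx.
      by right; rewrite -(graver_e1_pos Go) ?opprK ?psN ?pxN ?hs ?oppr0 //; lia.
    by left; apply: graver_e1_pos.
  right; left; exists i; split => //.
  case: (ltrgtP (pz g i) 0) => hp; last by rewrite hp eqxx in hz.
    by right; rewrite -(graver_e2_pos Go) ?opprK ?psN ?pzN ?hs ?oppr0 //; lia.
  by left; apply: graver_e2_pos.
move/existsPn => Hn; exfalso; move/negP: hn; apply; apply/eqP.
have Hn' : forall i, (i < k)%N -> px g i = 0 /\ pz g i = 0.
  by move=> i hi; have := Hn (Ordinal hi); rewrite negb_or !negbK => /andP [/eqP -> /eqP ->].
apply: vec_blk_ext => [i hi|i hi|i hi|i hi||]; rewrite ?px0 ?py0 ?pz0 ?pt0 ?ps0 ?pr0;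
  try (have := Hn' i hi; have := Hx i hi; have := Hz i hi); lia.
Qed.

End S.

Lemma bigmax_ge (I : eqType) (r : seq I) (F : I -> int) x :
  x \in r -> F x <= \big[Num.max/0]_(j <- r) F j.
Proof.
elim: r => // y r IH; rewrite inE big_cons => /orP [/eqP ->|h].
  by rewrite le_max lexx.
by rewrite le_max IH ?orbT.
Qed.

Section S.
Variables (k : nat) (w1 w2 : ivec k) (c : int).
Local Notation N := (4 * k + 2)%N.
Implicit Types g h u v : ivec N.
Local Notation A := (A_mat k).
Local Notation b := (b_vec w1 w2 c).

Lemma negnorm_ge (w : ivec k) i : (i < k)%N -> - vat w i <= negnorm w.
Proof.
move=> hi; rewrite (vat_ord _ (Ordinal hi)) /negnorm.
apply: le_trans (@bigmax_ge _ (index_enum 'I_k) (fun j : 'I_k => Num.max (- w j 0) 0) (Ordinal hi) (mem_index_enum _)).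
by rewrite le_max lexx.
Qed.

Lemma negnorm_ge0 (w : ivec k) : 0 <= negnorm w.
Proof.
rewrite /negnorm; apply: (big_ind (fun x : int => 0 <= x)) => //.
  by move=> x y hx hy; rewrite le_max hx.
by move=> i _; rewrite le_max lexx orbT.
Qed.

Lemma negnorm_le (w : ivec k) (M : int) : 0 <= M -> (forall i, (i < k)%N -> - vat w i <= M) ->
  negnorm w <= M.
Proof.
move=> h0 H; rewrite /negnorm; apply: (big_ind (fun x : int => x <= M)) => //.
  by move=> x y hx hy; rewrite ge_max hx.
by move=> i _; rewrite ge_max h0 andbT -(vat_ord w i) H.
Qed.

Lemma negnorm_lt (w : ivec k) (M : int) : 0 < M -> (forall i, (i < k)%N -> - vat w i < M) ->
  negnorm w < M.
Proof.
move=> h0 H; have : negnorm w <= M - 1.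
  by apply: negnorm_le => [|i hi]; [lia | have := H i hi; lia].
lia.
Qed.

Lemma fiber_facts u : in_fiber A b u ->
  (forall i, 0 <= px u i) /\ (forall i, 0 <= py u i) /\ (forall i, 0 <= pz u i) /\
  (forall i, 0 <= pt u i) /\ 0 <= ps u /\ 0 <= pr u /\
  (forall i, (i < k)%N -> px u i + py u i - ps u = vat w1 i) /\
  (forall i, (i < k)%N -> pz u i + pt u i - pr u = vat w2 i) /\ ps u + pr u = c.
Proof.
move=> [hn /Amul_iff [H1 [H2 H3]]]; have := nonneg_vat hn => hv.
by do 6 (split; first by move=> *; apply: hv).
Qed.

Lemma fiber_bounds u : in_fiber A b u -> negnorm w1 <= ps u /\ negnorm w2 <= pr u.
Proof.
move=> /fiber_facts [Fx [Fy [Fz [Ft [Fs [Fr [E1 [E2 E3]]]]]]]].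
split; apply: negnorm_le => // i hi.
  by have := E1 i hi; have := Fx i; have := Fy i; lia.
by have := E2 i hi; have := Fz i; have := Ft i; lia.
Qed.

Lemma adj_iff u v : in_fiber A b u ->
  (adjacent A b (graver A) u v <-> exists g, graver A g /\ v = u + g /\ nonneg v).
Proof.
move=> Fu; split.
  move=> [_ [[Fv _] [ne [G|G]]]].
    exists (- (u - v)); split; first exact: graver_opp.
    by split => //; rewrite opprB addrC subrK.
  by exists (- (u - v)); split => //; split => //; rewrite opprB addrC subrK.
move=> [g [[hk [hn hm]] [-> hv]]].
split => //; split.
  by split => //; rewrite mulmxDr hk addr0; case: Fu.
split.
  by move=> /(congr1 (fun x => x - u)); rewrite subrr addrC addKr => /eqP; rewrite eq_sym (negbTE hn).
by right; rewrite opprB addrC addKr; split => //.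
Qed.

End S.

Lemma uniq_sum (T1 T2 : eqType) (s1 : seq T1) (s2 : seq T2) :
  uniq s1 -> uniq s2 -> uniq (map inl s1 ++ map inr s2).
Proof.
move=> u1 u2; rewrite cat_uniq !map_inj_uniq //; last by move=> x y [].
  rewrite u1 u2 /= andbT; apply/hasPn => x /mapP [y _ ->]; apply/mapP => [[z _ //]].
by move=> x y [].
Qed.

Section S.
Variables (k : nat) (w1 w2 : ivec k) (c : int).
Local Notation N := (4 * k + 2)%N.
Implicit Types g h u v : ivec N.
Local Notation A := (A_mat k).
Local Notation b := (b_vec w1 w2 c).

Definition toN (f : {ffun 'I_k -> bool}) (j : nat) : bool :=
  if @insub nat (fun m => (m < k)%N) 'I_k j is Some o then f o else false.

Lemma toN_lt f j (hj : (j < k)%N) : toN f j = f (Ordinal hj).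
Proof. by rewrite /toN insubT. Qed.

Definition J := (('I_k + 'I_k) + ({ffun 'I_k -> bool} + {ffun 'I_k -> bool}))%type.

Definition mv u (x : J) : ivec N :=
  match x with
  | inl (inl i) => if 0 < px u i then - e1 k i else e1 k i
  | inl (inr i) => if 0 < pz u i then - e2 k i else e2 k i
  | inr (inl f) => H k (toN f) (fun j => 0 < pz u j)
  | inr (inr f) => - H k (fun j => 0 < px u j) (toN f)
  end.

Lemma ps_mv u x : ps (mv u x) =
  match x with inl _ => 0 | inr (inl _) => 1 | inr (inr _) => -1 end.
Proof.
case: x => [[i|i]|[f|f]] /=; try case: ifP => _;
  by rewrite ?psN /e1 /e2 /H ps_blk ?oppr0.
Qed.

Lemma px_mv u x j : (j < k)%N -> px (mv u x) j =
  match x with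
  | inl (inl i) => (if 0 < px u i then -1 else 1) * dl i j
  | inl (inr _) => 0
  | inr (inl f) => (toN f j)%:R
  | inr (inr f) => - ((0 < px u j)%R)%:R
  end.
Proof.
move=> hj; case: x => [[i|i]|[f|f]] /=; try case: ifP => _;
  by rewrite ?pxN /e1 /e2 /H px_blk // ?mulN1r ?mul1r ?oppr0.
Qed.

Lemma pz_mv u x j : (j < k)%N -> pz (mv u x) j =
  match x with
  | inl (inl _) => 0
  | inl (inr i) => (if 0 < pz u i then -1 else 1) * dl i j
  | inr (inl f) => - ((0 < pz u j)%R)%:R
  | inr (inr f) => (toN f j)%:R
  end.
Proof.
move=> hj; case: x => [[i|i]|[f|f]] /=; try case: ifP => _;
  by rewrite ?pzN /e1 /e2 /H pz_blk // ?mulN1r ?mul1r ?oppr0 ?opprK.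
Qed.

Lemma mv_inj u : injective (mv u).
Proof.
move=> x y E.
have Es := congr1 (@ps k) E; rewrite !ps_mv in Es.
have Ex j (hj : (j < k)%N) := congr1 (fun g => @px k g j) E.
have Ez j (hj : (j < k)%N) := congr1 (fun g => @pz k g j) E.
case: x E Es Ex Ez => [[i|i]|[f|f]]; case: y => [[j|j]|[f'|f']] E Es Ex Ez; move: Es => /= Es; try lia.
- have := Ex i (ltn_ord i); rewrite !px_mv // /dl eqxx.
  case: (eqVneq (i : nat) j) => [e|ne]; first by rewrite (val_inj e).
  by rewrite mulr0; case: ifP => _; lia.
- by have := Ex i (ltn_ord i); rewrite !px_mv // /dl eqxx; case: ifP => _; lia.
- by have := Ex j (ltn_ord j); rewrite !px_mv // /dl eqxx; case: ifP => _; lia.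
- have := Ez i (ltn_ord i); rewrite !pz_mv // /dl eqxx.
  case: (eqVneq (i : nat) j) => [e|ne]; first by rewrite (val_inj e).
  by rewrite mulr0; case: ifP => _; lia.
- congr (inr (inl _)); apply/ffunP => o; have := Ex o (ltn_ord o).
  rewrite !px_mv // !(toN_lt _ (ltn_ord o)) (_ : Ordinal (ltn_ord o) = o); last exact: val_inj.
  by case: (f o); case: (f' o).
- congr (inr (inr _)); apply/ffunP => o; have := Ez o (ltn_ord o).
  rewrite !pz_mv // !(toN_lt _ (ltn_ord o)) (_ : Ordinal (ltn_ord o) = o); last exact: val_inj.
  by case: (f o); case: (f' o).
Qed.

End S.

Section S.
Variables (k : nat) (w1 w2 : ivec k) (c : int).
Local Notation N := (4 * k + 2)%N.
Implicit Types g h u v : ivec N.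
Local Notation A := (A_mat k).
Local Notation b := (b_vec w1 w2 c).

Definition P1 u := [set i : 'I_k | w1 i 0 + ps u != 0].
Definition P2 u := [set i : 'I_k | w2 i 0 + pr u != 0].
Definition FF := enum [set: {ffun 'I_k -> bool}].
Definition idx u : seq (J k) :=
  map inl (map inl (enum (P1 u)) ++ map inr (enum (P2 u))) ++
  map inr (map inl (if ps u < c - negnorm w2 then FF else [::]) ++
           map inr (if negnorm w1 < ps u then FF else [::])).
Definition NL u := map (fun x => u + mv u x) (idx u).

Lemma size_FF : size FF = (2 ^ k)%N.
Proof. by rewrite /FF -cardE cardsT card_ffun card_bool card_ord. Qed.

Lemma uniq_NL u : uniq (NL u).
Proof.
rewrite /NL map_inj_uniq; last by move=> x y /addrI; apply: mv_inj.
apply: uniq_sum; apply: uniq_sum; rewrite ?enum_uniq //; case: ifP => // _; exact: enum_uniq.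
Qed.

Lemma size_NL u : size (NL u) =
  (#|P1 u| + #|P2 u| + (if (ps u < c - negnorm w2)%R then 2 ^ k else 0) +
   (if (negnorm w1 < ps u)%R then 2 ^ k else 0))%N.
Proof.
rewrite /NL size_map /idx !size_cat !size_map size_cat !size_map -!cardE.
by case: ifP => _; case: ifP => _; rewrite ?size_cat ?size_map ?size_FF /= ?addnA ?addn0.
Qed.

Lemma mem_idx u x : x \in idx u ->
  match x with
  | inl (inl i) => w1 i 0 + ps u != 0
  | inl (inr i) => w2 i 0 + pr u != 0
  | inr (inl _) => ps u < c - negnorm w2
  | inr (inr _) => negnorm w1 < ps u
  end.
Proof.
rewrite /idx mem_cat => /orP [] /mapP [y hy ->]; move: hy; rewrite mem_cat => /orP [] /mapP [z hz ->].
- by move: hz; rewrite mem_enum inE.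
- by move: hz; rewrite mem_enum inE.
- by move: hz; case: ifP.
- by move: hz; case: ifP.
Qed.

Lemma graver_mv u x : graver A (mv u x).
Proof.
case: x => [[i|i]|[f|f]] /=; try case: ifP => _;
  by apply/graver_opp || apply: graver_H || apply: graver_e1 || apply: graver_e2;
  try apply: graver_e1; try apply: graver_e2; try apply: graver_H.
Qed.


Lemma NL_adj u v : in_fiber A b u -> v \in NL u -> adjacent A b (graver A) u v.
Proof.
move=> Fu /mapP [x hx ->]; apply/(adj_iff _ Fu); exists (mv u x); split; first exact: graver_mv.
split => //.
have Cx := mem_idx hx.
have [Fx [Fy [Fz [Ft [Fs [Fr [E1 [E2 E3]]]]]]]] := fiber_facts Fu.
have n1 := negnorm_ge0 w1; have n2 := negnorm_ge0 w2.
case: x hx Cx => [[i|i]|[f|f]] hx Cx /=.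
- have hi := ltn_ord i; have e := E1 i hi; rewrite (vat_ord w1 i) in e.
  case: ifP => hp; apply: nonneg_blk => [j hj|j hj|j hj|j hj||];
  rewrite ?pxD ?pyD ?pzD ?ptD ?psD ?prD ?pxN ?pyN ?pzN ?ptN ?psN ?prN /e1 ?px_blk ?py_blk ?pz_blk ?pt_blk ?ps_blk ?pr_blk //;
  try (have := Fx j; have := Fy j; have := Fz j; have := Ft j); have := Fs; have := Fr;
  have := Fx i; have := Fy i; rewrite /dl;
  try (case: (eqVneq j i) => [ee|ne]; [subst j|]); lia.
- have hi := ltn_ord i; have e := E2 i hi; rewrite (vat_ord w2 i) in e.
  case: ifP => hp; apply: nonneg_blk => [j hj|j hj|j hj|j hj||];
  rewrite ?pxD ?pyD ?pzD ?ptD ?psD ?prD ?pxN ?pyN ?pzN ?ptN ?psN ?prN /e2 ?px_blk ?py_blk ?pz_blk ?pt_blk ?ps_blk ?pr_blk //;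
  try (have := Fx j; have := Fy j; have := Fz j; have := Ft j); have := Fs; have := Fr;
  have := Fz i; have := Ft i; rewrite /dl;
  try (case: (eqVneq j i) => [ee|ne]; [subst j|]); lia.
- apply: nonneg_blk => [j hj|j hj|j hj|j hj||];
  rewrite ?pxD ?pyD ?pzD ?ptD ?psD ?prD /H ?px_blk ?py_blk ?pz_blk ?pt_blk ?ps_blk ?pr_blk //;
  try (have := Fx j; have := Fy j; have := Fz j; have := Ft j; have := E2 j hj; have := negnorm_ge w2 hj;
       case: (toN f j); case: (boolP (0 < pz u j)) => /= ?); lia.
- apply: nonneg_blk => [j hj|j hj|j hj|j hj||];
  rewrite ?pxD ?pyD ?pzD ?ptD ?psD ?prD ?pxN ?pyN ?pzN ?ptN ?psN ?prN /H ?px_blk ?py_blk ?pz_blk ?pt_blk ?ps_blk ?pr_blk //;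
  try (have := Fx j; have := Fy j; have := Fz j; have := Ft j; have := E1 j hj; have := negnorm_ge w1 hj;
       case: (toN f j); case: (boolP (0 < px u j)) => /= ?); lia.
Qed.

End S.

Section S.
Variables (k : nat) (w1 w2 : ivec k) (c : int).
Local Notation N := (4 * k + 2)%N.
Implicit Types g h u v : ivec N.
Local Notation A := (A_mat k).
Local Notation b := (b_vec w1 w2 c).

Lemma card_allk (P : {set 'I_k}) : (forall i, i \in P) -> #|P| = k.
Proof.
move=> h; apply/eqP; rewrite eqn_leq; apply/andP; split.
  by have := max_card P; rewrite card_ord.
have := subset_leq_card (A := [set: 'I_k]) (B := P); rewrite cardsT card_ord; apply.
by apply/subsetP => i _; apply: h.
Qed.

Lemma supp_le (w : ivec k) : (supp_shift w <= k)%N.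
Proof. by have := max_card [set i : 'I_k | w i 0 + negnorm w != 0]; rewrite card_ord. Qed.

Lemma cP1_eq u : ps u = negnorm w1 -> #|P1 w1 u| = supp_shift w1.
Proof. by move=> E; rewrite /P1 /supp_shift E. Qed.
Lemma cP2_eq u : pr u = negnorm w2 -> #|P2 w2 u| = supp_shift w2.
Proof. by move=> E; rewrite /P2 /supp_shift E. Qed.
Lemma cP1_gt u : negnorm w1 < ps u -> #|P1 w1 u| = k.
Proof.
move=> h; apply: card_allk => i; rewrite inE.
have := negnorm_ge w1 (ltn_ord i); rewrite vat_ord; lia.
Qed.
Lemma cP2_gt u : negnorm w2 < pr u -> #|P2 w2 u| = k.
Proof.
move=> h; apply: card_allk => i; rewrite inE.
have := negnorm_ge w2 (ltn_ord i); rewrite vat_ord; lia.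
Qed.

Lemma H_ext s t s' t' : (forall j, (j < k)%N -> s j = s' j) -> (forall j, (j < k)%N -> t j = t' j) ->
  H k s t = H k s' t'.
Proof.
move=> Es Et; apply: vec_blk_ext => [j hj|j hj|j hj|j hj||];
  by rewrite ?px_blk ?py_blk ?pz_blk ?pt_blk ?ps_blk ?pr_blk // ?Es ?Et.
Qed.

Definition u0 (S0 : int) : ivec N :=
  blk k (fun i => vat w1 i + S0) (fun _ => 0) (fun i => vat w2 i + (c - S0)) (fun _ => 0) S0 (c - S0).

Lemma u0_fiber S0 : negnorm w1 <= S0 -> negnorm w2 <= c - S0 -> in_fiber A b (u0 S0).
Proof.
move=> h1 h2; have n1 := negnorm_ge0 w1; have n2 := negnorm_ge0 w2; split.
  apply: nonneg_blk => [j hj|j hj|j hj|j hj||]; rewrite ?px_blk ?py_blk ?pz_blk ?pt_blk ?ps_blk ?pr_blk //;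
  try (have := negnorm_ge w1 hj; have := negnorm_ge w2 hj); lia.
apply/Amul_iff; split; [|split].
- by move=> i hi; rewrite px_blk ?py_blk ?ps_blk //; lia.
- by move=> i hi; rewrite pz_blk ?pt_blk ?pr_blk //; lia.
- by rewrite ps_blk pr_blk; lia.
Qed.

Lemma u0_complete S0 v : negnorm w1 <= S0 -> negnorm w2 <= c - S0 ->
  adjacent A b (graver A) (u0 S0) v -> v \in NL w1 w2 c (u0 S0).
Proof.
move=> h1 h2; have Fu := u0_fiber h1 h2.
move/(adj_iff _ Fu) => [g [G [-> hv]]].
have hv' := nonneg_vat hv.
have Vx j : 0 <= px (u0 S0 + g) j := hv' j.
have Vy j : 0 <= py (u0 S0 + g) j := hv' _.
have Vz j : 0 <= pz (u0 S0 + g) j := hv' _.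
have Vt j : 0 <= pt (u0 S0 + g) j := hv' _.
have Vs : 0 <= ps (u0 S0 + g) := hv' _.
have Vr : 0 <= pr (u0 S0 + g) := hv' _.
have n1 := negnorm_ge0 w1; have n2 := negnorm_ge0 w2.
case: (graver_cases G) => [[i [hi [E|E]]]|[[i [hi [E|E]]]|[s [t [E|E]]]]]; subst g.
- by have := Vy i; rewrite pyD /u0 /e1 !py_blk // /dl eqxx; lia.
- have := Vx i; rewrite pxD pxN /u0 /e1 !px_blk // /dl eqxx (vat_ord w1 (Ordinal hi)) => hx.
  apply/mapP; exists (inl (inl (Ordinal hi))).
    by rewrite /idx mem_cat map_f // mem_cat map_f // mem_enum inE ps_blk; lia.
  by rewrite /= /u0 px_blk // (vat_ord w1 (Ordinal hi)) ifT //; lia.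
- by have := Vt i; rewrite ptD /u0 /e2 !pt_blk // /dl eqxx; lia.
- have := Vz i; rewrite pzD pzN /u0 /e2 !pz_blk // /dl eqxx (vat_ord w2 (Ordinal hi)) => hx.
  apply/mapP; exists (inl (inr (Ordinal hi))).
    by rewrite /idx mem_cat map_f // mem_cat orbC map_f // mem_enum inE pr_blk; lia.
  by rewrite /= /u0 pz_blk // (vat_ord w2 (Ordinal hi)) ifT //; lia.
- have Ht j : (j < k)%N -> t j = true.
    by move=> hj; have := Vt j; rewrite ptD /u0 /H !pt_blk //; case: (t j) => //=; lia.
  have Hz j : (j < k)%N -> 1 <= vat w2 j + (c - S0).
    by move=> hj; have := Vz j; rewrite pzD /u0 /H !pz_blk // Ht //=; lia.
  have hlt : S0 < c - negnorm w2.
    have : negnorm w2 < c - S0.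
      apply: negnorm_lt => [|j hj]; last by have := Hz j hj; lia.
      by have := Vr; rewrite prD /u0 /H !pr_blk; lia.
    lia.
  apply/mapP; exists (inr (inl [ffun o : 'I_k => s o])).
    by rewrite /idx mem_cat orbC map_f // mem_cat map_f // /u0 ps_blk hlt /FF mem_enum inE.
  rewrite /=; congr (_ + _); apply: H_ext => j hj.
    by rewrite (toN_lt _ hj) ffunE.
  by rewrite Ht // /u0 pz_blk //; have := Hz j hj; lia.
- have Hs j : (j < k)%N -> s j = true.
    by move=> hj; have := Vy j; rewrite pyD pyN /u0 /H !py_blk //; case: (s j) => //=; lia.
  have Hx j : (j < k)%N -> 1 <= vat w1 j + S0.
    by move=> hj; have := Vx j; rewrite pxD pxN /u0 /H !px_blk // Hs //=; lia.
  have hlt : negnorm w1 < S0.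
    apply: negnorm_lt => [|j hj]; last by have := Hx j hj; lia.
    by have := Vs; rewrite psD psN /u0 /H !ps_blk; lia.
  apply/mapP; exists (inr (inr [ffun o : 'I_k => t o])).
    by rewrite /idx mem_cat orbC map_f // mem_cat orbC map_f // /u0 ps_blk hlt /FF mem_enum inE.
  rewrite /=; congr (_ + - _); apply: H_ext => j hj.
    by rewrite Hs // /u0 px_blk //; have := Hx j hj; lia.
  by rewrite (toN_lt _ hj) ffunE.
Qed.

End S.

Section S.
Variables (k : nat) (w1 w2 : ivec k) (c : int).
Local Notation N := (4 * k + 2)%N.
Local Notation A := (A_mat k).
Local Notation b := (b_vec w1 w2 c).

Lemma degree_NL (u : ivec N) d : in_fiber A b u -> has_degree A b (graver A) u d ->
  (size (NL w1 w2 c u) <= d)%N.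
Proof.
move=> Fu [s [us [<- Hs]]]; apply: uniq_leq_size (uniq_NL _ _ _ u) _ => v hv.
by apply/Hs; apply: NL_adj.
Qed.

Lemma has_degree_u0 S0 : negnorm w1 <= S0 -> negnorm w2 <= c - S0 ->
  has_degree A b (graver A) (u0 w1 w2 c S0) (size (NL w1 w2 c (u0 w1 w2 c S0))).
Proof.
move=> h1 h2; exists (NL w1 w2 c (u0 w1 w2 c S0)); split; first exact: uniq_NL.
split => // v; split; first by apply: NL_adj; apply: u0_fiber.
exact: u0_complete.
Qed.

Lemma size_u0 S0 : size (NL w1 w2 c (u0 w1 w2 c S0)) =
  (#|P1 w1 (u0 w1 w2 c S0)| + #|P2 w2 (u0 w1 w2 c S0)| +
   (if (S0 < c - negnorm w2)%R then 2 ^ k else 0) +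
   (if (negnorm w1 < S0)%R then 2 ^ k else 0))%N.
Proof. by rewrite size_NL /u0 ps_blk. Qed.

End S.

Theorem proposition3 (k : nat) (hk : (1 <= k)%N) (w1 w2 : 'cV[int]_k) (c : int) :
  (l_b w1 w2 c = u_b w1 w2 c ->
     min_degree (A_mat k) (b_vec w1 w2 c) (graver (A_mat k))
       (supp_shift w1 + supp_shift w2)) /\
  (l_b w1 w2 c < u_b w1 w2 c ->
     min_degree (A_mat k) (b_vec w1 w2 c) (graver (A_mat k))
       (minn (supp_shift w1) (supp_shift w2) + k + 2 ^ k)).
Proof.
rewrite /l_b /u_b; have n1 := negnorm_ge0 w1; have n2 := negnorm_ge0 w2.
have sl1 := supp_le w1; have sl2 := supp_le w2.
split => hlu.
  split.
    exists (u0 w1 w2 c (negnorm w1)); split; first by apply: u0_fiber; lia.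
    have -> : (supp_shift w1 + supp_shift w2)%N = size (NL w1 w2 c (u0 w1 w2 c (negnorm w1))).
      rewrite size_u0 cP1_eq ?cP2_eq /u0 ?ps_blk ?pr_blk //; last lia.
      all: try (rewrite ifF ?ifF ?addn0; lia).
    by apply: has_degree_u0; lia.
  move=> u d Fu hd; have := degree_NL Fu hd; rewrite size_NL.
  have [B1 B2] := fiber_bounds Fu.
  have [_ [_ [_ [_ [_ [_ [_ [_ E3]]]]]]]] := fiber_facts Fu.
  rewrite cP1_eq ?cP2_eq; try lia.
split.
  case: (boolP (supp_shift w1 <= supp_shift w2)%N) => hm.
    exists (u0 w1 w2 c (negnorm w1)); split; first by apply: u0_fiber; lia.
    have -> : (minn (supp_shift w1) (supp_shift w2) + k + 2 ^ k)%N =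
       size (NL w1 w2 c (u0 w1 w2 c (negnorm w1))).
      rewrite size_u0 cP1_eq ?cP2_gt /u0 ?ps_blk ?pr_blk //; last lia.
      all: try (rewrite ifT ?ifF ?addn0; lia).
    by apply: has_degree_u0; lia.
  exists (u0 w1 w2 c (c - negnorm w2)); split; first by apply: u0_fiber; lia.
  have -> : (minn (supp_shift w1) (supp_shift w2) + k + 2 ^ k)%N =
     size (NL w1 w2 c (u0 w1 w2 c (c - negnorm w2))).
    rewrite size_u0 cP1_gt ?cP2_eq /u0 ?ps_blk ?pr_blk //; try lia.
    all: try (rewrite ifF ?ifT ?addn0; lia).
  by apply: has_degree_u0; lia.
move=> u d Fu hd; have := degree_NL Fu hd; rewrite size_NL.
have [B1 B2] := fiber_bounds Fu.
have [_ [_ [_ [_ [_ [_ [_ [_ E3]]]]]]]] := fiber_facts Fu.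
have [e1|g1] : ps u = negnorm w1 \/ negnorm w1 < ps u by lia.
  rewrite cP1_eq ?cP2_gt; try lia.
  all: try (rewrite ifT ?ifF ?addn0; lia).
have [e2|g2] : pr u = negnorm w2 \/ negnorm w2 < pr u by lia.
  rewrite cP1_gt ?cP2_eq; try lia.
  all: try (rewrite ifF ?ifT ?addn0; lia).
rewrite cP1_gt ?cP2_gt; try lia.
all: try (rewrite ifT ?ifT; lia).
Qed.
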